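(* Every regular Stanley sequence of character $0$ has $S(0)$ as its core, where $S(0)=0,1,3,4,9,10,12,13,27,\ldots$ is the Stanley sequence generated by $\{0\}$.
   Context: A set of non-negative integers is 3-free if no three of its elements form an arithmetic progression. For a finite 3-free set $A=\{a_0<\cdots<a_k\}$ of non-negative integers, the Stanley sequence $S(A)=(a_n)_{n\ge0}$ is the increasing sequence with initial terms $a_0,\ldots,a_k$ in which each subsequent $a_{n+1}$ is the smallest integer greater than $a_n$ such that $\{a_0,\ldots,a_{n+1}\}$ is 3-free. Throughout, Stanley sequences are in root position ($a_0=0$). A Stanley sequence $(a_n)$ is independent with character $\lambda$ if for all sufficiently large $k$: $a_{2^k+i}=a_{2^k}+a_i$ for $0\le i<2^k$, and $a_{2^k}=2a_{2^k-1}-\lambda+1$. A Stanley sequence $(a_n)$ is regular with character $\lambda$ and core $(a'_n)$ if there exist a constant $\sigma$ and an independent Stanley sequence $(a'_n)$ of character $\lambda$ such that for all large $k$ and $0\le i<2^k$: $a_{2^k-\sigma+i}=a_{2^k-\sigma}+a'_i$ and $a_{2^k-\sigma}=2a_{2^k-\sigma-1}-\lambda+1$ (these data are unique). *)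

(* Defs.v *)
From mathcomp Require Import all_boot all_order all_algebra.
Set Implicit Arguments. Unset Strict Implicit. Unset Printing Implicit Defensive.
Import Order.TTheory GRing.Theory Num.Theory.

Definition three_free (P : nat -> Prop) : Prop :=
  forall x y z, P x -> P y -> P z -> x < y -> y < z -> x + z <> 2 * y.

Definition init_set (a : nat -> nat) (n : nat) : nat -> Prop :=
  fun x => exists2 i, i <= n & a i = x.

Definition stanley_of (A : seq nat) (a : nat -> nat) : Prop :=
  [/\ A != [::], sorted ltn A, three_free (fun x => x \in A),
      (forall i, i < size A -> a i = nth 0 A i) &
      (forall n, (size A).-1 <= n ->
         [/\ a n < a n.+1,
             three_free (init_set a n.+1) &
             forall m, a n < m -> m < a n.+1 ->
               ~ three_free (fun x => init_set a n x \/ x = m)])].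

(* A Stanley sequence in root position: S(A) for some finite 3-free A with
   a_0 = 0. *)
Definition stanley (a : nat -> nat) : Prop :=
  exists A, stanley_of A a /\ a 0 = 0.

Definition independent (a : nat -> nat) (lam : int) : Prop :=
  exists K, forall k, K <= k ->
    (forall i, i < 2 ^ k -> a (2 ^ k + i) = a (2 ^ k) + a i) /\
    Posz (a (2 ^ k)%N) = (2 * Posz (a (2 ^ k - 1)%N) - lam + 1)%R.

(* a is regular with character lam and core a'. Indices 2^k - sigma are
   taken in int (sigma is an integer constant); for large k they are
   positive, which we record explicitly. *)
Definition regular_core (a : nat -> nat) (lam : int) (a' : nat -> nat) : Prop :=
  stanley a' /\ independent a' lam /\
  exists sigma : int, exists K, forall k, K <= k ->
    let n := `|Posz (2 ^ k)%N - sigma|%N in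
    (0 < Posz (2 ^ k)%N - sigma)%R /\
    (forall i, i < 2 ^ k -> a (n + i) = a n + a' i) /\
    Posz (a n) = (2 * Posz (a n.-1%N) - lam + 1)%R.

(* Main.v *)
Require Import Defs.
From mathcomp Require Import all_boot all_order all_algebra.
From mathcomp Require Import zify.

Lemma tf_sub (P Q : nat -> Prop) :
  (forall x, P x -> Q x) -> three_free Q -> three_free P.
Proof. move=> PQ tQ x y z Px Py Pz; apply: tQ; auto. Qed.

Theorem mainTheorem13 (a a' : nat -> nat) :
  stanley a -> regular_core a 0%R a' -> stanley_of [:: 0] a'.
Proof.
move=> _ [[A [[_ _ _ _ HG] a0]] [[K HI] _]].
have Hk : forall n, exists k, [/\ K <= k, n.+1 < 2 ^ k & (size A).-1 <= 2 ^ k + n].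
  move=> n; exists (K + size A + n.+2); split.
  - lia.
  - have := ltn_expl (K + size A + n.+2) (isT : 1 < 2); lia.
  - have := ltn_expl (K + size A + n.+2) (isT : 1 < 2); lia.
have Hmono : forall n, a' n < a' n.+1.
  move=> n; have [k [Kk nk Ak]] := Hk n; have [Hs _] := HI k Kk.
  case: (HG _ Ak) => + _ _; rewrite -addnS !Hs //; lia.
have Hle : forall i j, i <= j -> a' i <= a' j.
  move=> i j /subnK <-; elim: (j - i) => // d IH; rewrite addSn.
  exact: leq_trans IH (ltnW (Hmono _)).
split => //.
- by move=> x y z; rewrite !inE => /eqP-> /eqP->.
- by move=> [|i].
move=> n _; have [k [Kk nk Ak]] := Hk n; have [Hs Hc] := HI k Kk.
set N := 2 ^ k in nk Ak Hs Hc *.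
have HC : a' N = 2 * a' (N - 1) + 1 by lia.
have HNn := Hs n (ltnW nk).
have HNn1 := Hs n.+1 nk.
have Hn1 := Hle n.+1 (N - 1) ltac:(lia).
case: (HG _ Ak) => g1 g2 g3; split.
- exact: Hmono.
- apply: tf_sub g2 => x [i ilt <-]; exists i => //; lia.
move=> m lo hi tf; apply: (g3 (a' N + m)).
- rewrite HNn; lia.
- rewrite -[(N + n).+1]addnS HNn1; lia.
move=> x y z Px Py Pz xy yz E.
case: Pz => [[iz izl Ez] | Ez].
- have := Hle _ _ izl.
  case: Px => [[ix ixl Ex] | Ex]; last lia.
  case: Py => [[iy iyl Ey] | Ey]; last lia.
  move=> _; apply: (g2 x y z) => //.
  + by exists ix => //; lia.
  + by exists iy => //; lia.
  + by exists iz => //; lia.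
- case: Py => [[iy iyl Ey] | Ey]; last lia.
  case: (ltnP iy N) => iyN.
  + have := Hle iy (N - 1) ltac:(lia). lia.
  + have Ej : iy = N + (iy - N) by lia.
    have Hj := Hs (iy - N) ltac:(lia).
    rewrite -Ej in Hj.
    case: Px => [[ix ixl Ex] | Ex]; last lia.
    case: (ltnP ix N) => ixN.
    * have := Hle ix (N - 1) ltac:(lia). lia.
    * have Ej1 : ix = N + (ix - N) by lia.
      have Hj1 := Hs (ix - N) ltac:(lia).
      rewrite -Ej1 in Hj1.
      apply: (tf (a' (ix - N)) (a' (iy - N)) m).
      -- by left; exists (ix - N) => //; lia.
      -- by left; exists (iy - N) => //; lia.
      -- by right.
      -- lia.
      -- lia.
      -- lia.
Qed.
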